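(* The group $\Gamma^{(2)} = \text{GU}_2(D)\cap U_2$ consists of the following set of matrices: \[\Gamma^{(2)} =\text{SU}_{2}(D)\cap g^{-1}\text{GL}_2(\mathcal{O})g.\]
   Context: $D$ is a definite quaternion algebra over $\mathbb{Q}$ ramified exactly at $\{p,\infty\}$ for a fixed prime $p$, with standard involution $x\mapsto\overline{x}$, and $\mathcal{O}$ is a fixed maximal order. $\text{GU}_2(D) = \{g\in M_2(D)\,|\,g\overline{g}^T = \mu(g)I,\ \mu(g)\in\mathbb{Q}^\times\}$ is the unitary similitude group, and $\text{SU}_2(D)$ denotes its elements with similitude $\mu=1$. Fix $g\in\text{GL}_2(D)$ such that the left $\mathcal{O}$-lattice $\mathcal{O}^2 g\subseteq D^2$ lies in the non-principal genus (i.e. its completion at $p$ is not locally equivalent to $\mathcal{O}_p^2$). Let $U_2 = \text{Stab}_{\text{GU}_2(D_{\mathbb{A}_f})}(\mathcal{O}^2 g)$ be the corresponding open compact subgroup of $\text{GU}_2(D_{\mathbb{A}_f})$, and $\Gamma^{(2)} = \text{GU}_2(D)\cap U_2$, i.e. $\Gamma^{(2)} = \text{Stab}_{\text{GU}_2(D)}(\mathcal{O}^2 g)$. *)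

(* Defs.v *)
From HB Require Import structures.
From mathcomp Require Import all_boot all_order all_algebra all_field.
Set Implicit Arguments. Unset Strict Implicit. Unset Printing Implicit Defensive.
Import Order.TTheory GRing.Theory Num.Theory.
Local Open Scope ring_scope.

Section Quaternion.
Variable D : falgType rat.

Definition quaternion_division_algebra : Prop :=
  [/\ \dim (fullv : {vspace D}) = 4%N,
      (forall x : D, (forall y : D, x * y = y * x) -> exists r : rat, x = r%:A) &
      (forall x : D, x != 0 -> x \is a GRing.unit)].

Definition standard_involution (conj : D -> D) : Prop :=
  [/\ (forall (r : rat) (x y : D), conj (r *: x + y) = r *: conj x + conj y),
      (forall x y : D, conj (x * y) = conj y * conj x),
      (forall x : D, conj (conj x) = x),
      conj 1 = 1 &
      (forall x : D, exists t n : rat, x + conj x = t%:A /\ x * conj x = n%:A)].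

Definition definite (conj : D -> D) : Prop :=
  forall x : D, x != 0 -> exists n : rat, 0 < n /\ x * conj x = n%:A.

Definition lattice_basis (O : D -> Prop) (e : 'I_4 -> D) : Prop :=
  (forall x : D, O x <-> exists c : 'I_4 -> int, x = \sum_i ((c i)%:~R : rat) *: e i) /\
  (forall x : D, exists r : 'I_4 -> rat, x = \sum_i r i *: e i).

Definition is_order (O : D -> Prop) : Prop :=
  [/\ exists e, lattice_basis O e, O 1 & (forall x y, O x -> O y -> O (x * y))].

Definition maximal_order (O : D -> Prop) : Prop :=
  is_order O /\
  forall O' : D -> Prop, is_order O' -> (forall x, O x -> O' x) -> forall x, O' x -> O x.

Definition reduced_disc (conj : D -> D) (O : D -> Prop) (d : nat) : Prop :=
  exists e, lattice_basis O e /\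
  exists T : 'M[rat]_4,
    (forall i j, (T i j)%:A = e i * e j + conj (e i * e j)) /\
    `|\det T| = (d ^ 2)%:R.

Definition ctr {m n} (conj : D -> D) (A : 'M[D]_(m, n)) : 'M[D]_(n, m) :=
  (map_mx conj A)^T.

Definition GU2 (conj : D -> D) (g : 'M[D]_2) : Prop :=
  exists mu : rat, mu != 0 /\ g *m ctr conj g = (mu%:A)%:M.

Definition SU2 (conj : D -> D) (g : 'M[D]_2) : Prop :=
  g *m ctr conj g = 1%:M.

Definition GL2O (O : D -> Prop) (u : 'M[D]_2) : Prop :=
  (forall i j, O (u i j)) /\
  exists ui : 'M[D]_2, (forall i j, O (ui i j)) /\ u *m ui = 1%:M /\ ui *m u = 1%:M.

Definition in_lattice (O : D -> Prop) (g : 'M[D]_2) (w : 'rV[D]_2) : Prop :=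
  exists v : 'rV[D]_2, (forall j, O (v 0 j)) /\ w = v *m g.

Definition stabilises (O : D -> Prop) (g gamma : 'M[D]_2) : Prop :=
  (forall w, in_lattice O g w -> in_lattice O g (w *m gamma)) /\
  (forall w, in_lattice O g w -> exists w', in_lattice O g w' /\ w' *m gamma = w).

(* D_p is the completion of D for the p-adic topology whose neighbourhoods of 0
   are the p^k O_(p), O_(p) = O localised at p.  Elements of M_{m,n}(D_p) are
   represented by (entrywise) Cauchy sequences of matrices over D. *)
Variables (conj : D -> D) (O : D -> Prop) (p : nat).

Definition Oloc (x : D) : Prop :=
  exists n : nat, coprime n p /\ O ((n%:R : rat) *: x).

Definition psmall (k : nat) (x : D) : Prop := Oloc (((p ^ k)%:R : rat)^-1 *: x).

Definition cauchyD (s : nat -> D) : Prop :=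
  forall k, exists N, forall a b, (N <= a)%N -> (N <= b)%N -> psmall k (s a - s b).

Definition nullD (s : nat -> D) : Prop :=
  forall k, exists N, forall a, (N <= a)%N -> psmall k (s a).

Definition cauchyM {m n} (s : nat -> 'M[D]_(m, n)) : Prop :=
  forall i j, cauchyD (fun a => s a i j).

Definition eqpM {m n} (s t : nat -> 'M[D]_(m, n)) : Prop :=
  forall i j, nullD (fun a => s a i j - t a i j).

(* entries in O_p = closure of O in D_p *)
Definition intpM {m n} (s : nat -> 'M[D]_(m, n)) : Prop :=
  forall i j, exists N, forall a, (N <= a)%N -> Oloc (s a i j).

Definition GU2p (h : nat -> 'M[D]_2) : Prop :=
  cauchyM h /\
  exists mu : nat -> rat,
    cauchyD (fun a => (mu a)%:A) /\ ~ nullD (fun a => (mu a)%:A) /\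
    eqpM (fun a => h a *m ctr conj (h a)) (fun a => ((mu a)%:A)%:M).

Definition lattice_p_eq (M : nat -> 'M[D]_2) : Prop :=
  (forall w : nat -> 'rV[D]_2, cauchyM w -> intpM w ->
      intpM (fun a => w a *m M a)) /\
  (forall w : nat -> 'rV[D]_2, cauchyM w -> intpM w ->
      exists v : nat -> 'rV[D]_2,
        [/\ cauchyM v, intpM v & eqpM (fun a => v a *m M a) w]).

Definition principal_genus_at_p (g : 'M[D]_2) : Prop :=
  exists h : nat -> 'M[D]_2, GU2p h /\ lattice_p_eq (fun a => g *m h a).

End Quaternion.

(* Main.v *)
Require Import Defs.
From HB Require Import structures.
From mathcomp Require Import all_boot all_order all_algebra all_field.
From mathcomp Require Import ring lra.
Import Order.TTheory GRing.Theory Num.Theory.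
Local Open Scope ring_scope.

Lemma den_lemma (I : finType) (f : I -> rat) :
  exists M : nat, (0 < M)%N /\ forall i, exists z : int, M%:R * f i = z%:~R.
Proof.
exists (\prod_i `|denq (f i)|)%N; split.
  by rewrite prodn_gt0 // => i; rewrite absz_gt0 denq_neq0.
move=> i; rewrite (bigD1 i) //= natrM.
exists ((\prod_(j | j != i) `|denq (f j)|)%N%:Z * numq (f i)).
rewrite intrM numqE natr_absz ger0_norm ?ltW ?denq_gt0 // pmulrn.
by rewrite [_ * _%:~R]mulrC -mulrA [_ * f i]mulrC.
Qed.

Lemma bern (a : rat) (k : nat) : 1 < a -> 1 + k%:R * (a - 1) <= a ^+ k.
Proof.
move=> Ha; elim: k => [|k IH]; first by rewrite mul0r addr0 expr0.
rewrite exprS -natr1.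
have H0 : 0 <= k%:R :> rat by apply: ler0n.
have H1 : a * (1 + k%:R * (a - 1)) <= a * a ^+ k by rewrite ler_wpM2l //; lra.
have H2 : 0 <= k%:R * ((a - 1) * (a - 1)).
  by rewrite mulr_ge0 // mulr_ge0 //; lra.
have E : a * (1 + k%:R * (a - 1)) = 1 + (k%:R + 1) * (a - 1) + k%:R * ((a - 1) * (a - 1)) by ring.
apply: le_trans H1; rewrite E lerDl //.
Qed.

Lemma small_pow (a m : rat) (K : nat) : 1 < a -> 0 < m -> (0 < K)%N ->
  exists k : nat, K%:R * (m / a ^+ k) < 1.
Proof.
move=> Ha Hm HK.
set x := K%:R * m / (a - 1).
have hx : 0 <= x.
  rewrite /x divr_ge0 //; first by rewrite mulr_ge0 ?ler0n ?ltW.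
  by rewrite subr_ge0 ltW.
have := archi_boundP hx; set k := Num.Def.archi_bound x => hk.
exists k.
have hb := bern a k Ha.
have ha0 : 0 < a ^+ k by apply: exprn_gt0; apply: lt_trans Ha.
rewrite mulrA ltr_pdivrMr // mul1r.
have : K%:R * m < k%:R * (a - 1).
  by rewrite -ltr_pdivrMr ?subr_gt0.
move=> H; apply: lt_le_trans H _; apply: le_trans _ hb; rewrite lerDr ler01. all: try done.
Qed.

Section Alg.
Variable D : falgType rat.
Variable conj : D -> D.
Hypothesis Hc : standard_involution conj.

Lemma conjD x y : conj (x + y) = conj x + conj y.
Proof. by case: Hc => H _ _ _ _; have := H 1 x y; rewrite !scale1r. Qed.

Lemma conj0 : conj 0 = 0.
Proof.
have h := conjD 0 0; rewrite addr0 in h.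
by apply: (@addrI _ (conj 0)); rewrite addr0 -h.
Qed.

Lemma conjZ r x : conj (r *: x) = r *: conj x.
Proof. by case: Hc => H _ _ _ _; have := H r x 0; rewrite !addr0 conj0 addr0. Qed.

Lemma conjM x y : conj (x * y) = conj y * conj x.
Proof. by case: Hc. Qed.

Lemma conjK x : conj (conj x) = x.
Proof. by case: Hc. Qed.

Lemma conj_sum (I : Type) (r : seq I) (P : pred I) (F : I -> D) :
  conj (\sum_(i <- r | P i) F i) = \sum_(i <- r | P i) conj (F i).
Proof. exact: (big_morph conj conjD conj0). Qed.

Lemma mulAl (r : rat) (x : D) : r%:A * x = r *: x.
Proof. by rewrite -scalerAl mul1r. Qed.

Lemma mulAr (r : rat) (x : D) : x * r%:A = r *: x.
Proof. by rewrite -scalerAr mulr1. Qed.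

Lemma A_inj (r s : rat) : r%:A = s%:A :> D -> r = s.
Proof.
move=> /eqP; rewrite -subr_eq0 -scalerBl scaler_eq0 oner_eq0 orbF subr_eq0.
by move/eqP.
Qed.

Lemma ctrM m n k (A : 'M[D]_(m, n)) (B : 'M[D]_(n, k)) :
  ctr conj (A *m B) = ctr conj B *m ctr conj A.
Proof.
apply/matrixP => i j; rewrite !mxE conj_sum; apply: eq_bigr => l _.
by rewrite !mxE conjM.
Qed.

Definition Q (x : 'rV[D]_2) : D := (x *m ctr conj x) 0 0.

Lemma QE x : Q x = \sum_j x 0 j * conj (x 0 j).
Proof. by rewrite /Q !mxE; apply: eq_bigr => j _; rewrite !mxE. Qed.

Hypothesis Hd : definite conj.

Lemma norm_ge0 x : exists n : rat, 0 <= n /\ x * conj x = n%:A.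
Proof.
have [->|nz] := eqVneq x 0.
  by exists 0; rewrite conj0 mul0r scale0r.
by have [n [n0 hn]] := Hd _ nz; exists n; split=> //; apply: ltW.
Qed.

Lemma Q_ge0 x : exists r, 0 <= r /\ Q x = r%:A.
Proof.
rewrite QE; apply: (big_ind (fun t => exists r, 0 <= r /\ t = r%:A)).
- by exists 0; rewrite scale0r.
- move=> _ _ [a [a0 ->]] [b [b0 ->]]; exists (a + b); rewrite scalerDl.
  by split=> //; apply: addr_ge0.
- by move=> j _; apply: norm_ge0.
Qed.

Lemma Q_gt0 x : x != 0 -> exists r, 0 < r /\ Q x = r%:A.
Proof.
move=> nz.
have [j hj] : exists j, x 0 j != 0.
  apply/existsP; apply: contraR nz; rewrite negb_exists => /forallP H.
  apply/eqP/matrixP => i j; rewrite ord1 mxE; apply/eqP.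
  by have := H j; rewrite negbK.
have [a [a0 ha]] := Hd _ hj.
have [b [b0 hb]] : exists r, 0 <= r /\ \sum_(k | k != j) x 0 k * conj (x 0 k) = r%:A.
  apply: (big_ind (fun t => exists r, 0 <= r /\ t = r%:A)).
  - by exists 0; rewrite scale0r.
  - move=> _ _ [a' [a0' ->]] [b' [b0' ->]]; exists (a' + b'); rewrite scalerDl.
    by split=> //; apply: addr_ge0.
  - by move=> k _; apply: norm_ge0.
exists (a + b); split; first by apply: ltr_wpDr.
by rewrite QE (bigD1 j) //= ha hb scalerDl.
Qed.

Lemma Q_mul (g : 'M[D]_2) (mu r : rat) (x : 'rV[D]_2) :
  g *m ctr conj g = (mu%:A)%:M -> Q x = r%:A -> Q (x *m g) = (mu * r)%:A.
Proof.
move=> hg hx.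
rewrite /Q ctrM mulmxA -(mulmxA x) hg.
have -> : x *m (mu%:A)%:M = \row_j (mu *: x 0 j).
  apply/matrixP => i j; rewrite ord1 !mxE (bigD1 j) //= big1 ?addr0.
    by rewrite !mxE eqxx mulr1n mulAr.
  by move=> k /negbTE hk; rewrite !mxE hk mulr0n mulr0.
have -> : (mu * r)%:A = mu *: r%:A :> D by rewrite scalerA.
rewrite -hx QE !mxE scaler_sumr; apply: eq_bigr => j _.
by rewrite !mxE -scalerAl.
Qed.

End Alg.

Lemma intr_sum (I : Type) (r : seq I) (P : pred I) (F : I -> int) :
  (\sum_(i <- r | P i) F i)%:~R = \sum_(i <- r | P i) (F i)%:~R :> rat.
Proof. exact: (big_morph (fun z : int => z%:~R : rat) (@intrD _) (erefl _)). Qed.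

Section Lat.
Variable D : falgType rat.
Variable conj : D -> D.
Hypothesis Hc : standard_involution conj.
Variable O : D -> Prop.
Variable e : 'I_4 -> D.
Hypothesis He : lattice_basis O e.

Lemma O0 : O 0.
Proof. by apply/He.1; exists (fun _ => 0); rewrite big1 // => i _; rewrite scale0r. Qed.

Lemma OD x y : O x -> O y -> O (x + y).
Proof.
move=> /He.1 [c ->] /He.1 [d ->]; apply/He.1; exists (fun i => c i + d i).
by rewrite -big_split /=; apply: eq_bigr => i _; rewrite intrD scalerDl.
Qed.

Lemma Osum (I : Type) (r : seq I) (P : pred I) (F : I -> D) :
  (forall i, P i -> O (F i)) -> O (\sum_(i <- r | P i) F i).
Proof. by move=> H; apply: (big_ind O O0 OD). Qed.

Lemma norm_O : exists K : nat, (0 < K)%N /\ forall y n, O y -> y * conj y = n%:A ->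
  exists z : int, K%:R * n = z%:~R.
Proof.
have : forall ij : 'I_4 * 'I_4, exists t : rat,
    e ij.1 * conj (e ij.2) + e ij.2 * conj (e ij.1) = t%:A.
  move=> [i j] /=; case: Hc => _ _ _ _ H.
  have [t [n [ht _]]] := H (e i * conj (e j)).
  by exists t; rewrite -ht (@conjM _ _ Hc) (@conjK _ _ Hc).
move=> /fin_all_exists [B hB].
have [M [M0 hM]] := @den_lemma _ B.
move: hM => /fin_all_exists [zB hzB].
exists (2 * M)%N; split; first by rewrite muln_gt0 M0.
move=> y n /He.1 [c hy] hn.
exists (\sum_i \sum_j (c i * c j * zB (i, j))).
set T := fun i j => ((c i)%:~R * (c j)%:~R : rat) *: (e i * conj (e j)).
have E1 : y * conj y = \sum_i \sum_j T i j.
  rewrite hy (@conj_sum _ _ Hc) mulr_suml; apply: eq_bigr => i _.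
  rewrite mulr_sumr; apply: eq_bigr => j _.
  by rewrite /T (@conjZ _ _ Hc) -scalerAl -scalerAr scalerA.
have E2 : y * conj y + y * conj y =
    (\sum_i \sum_j ((c i)%:~R * (c j)%:~R * B (i, j)))%:A.
  rewrite {2}E1 exchange_big /= E1 -big_split /=.
  rewrite (big_morph (fun r : rat => r%:A : D) (@scalerDl _ _ 1) (scale0r _)).
  apply: eq_bigr => i _.
  rewrite -big_split /=.
  rewrite (big_morph (fun r : rat => r%:A : D) (@scalerDl _ _ 1) (scale0r _)).
  apply: eq_bigr => j _.
  rewrite /T [(c j)%:~R * _]mulrC -scalerDr.
  by move: (hB (i, j)) => /= ->; rewrite scalerA.
rewrite hn -scalerDl in E2.
have := @A_inj _ _ _ E2 => E3.
have -> : (2 * M)%N%:R * n = M%:R * (n + n) by rewrite natrM; ring.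
rewrite E3 mulr_sumr intr_sum; apply: eq_bigr => i _.
rewrite mulr_sumr intr_sum; apply: eq_bigr => j _.
by rewrite !intrM -(hzB (i, j)); ring.
Qed.

Hypothesis OM : forall x y, O x -> O y -> O (x * y).

Lemma den_mat (g : 'M[D]_2) :
  exists N : nat, (0 < N)%N /\ forall k l, O (N%:R *: g k l).
Proof.
have : forall kl : 'I_2 * 'I_2, exists r : 'I_4 -> rat,
    g kl.1 kl.2 = \sum_i r i *: e i by move=> kl; apply: He.2.
move=> /fin_all_exists [R hR].
have [N [N0 hN]] := @den_lemma _ (fun p : ('I_2 * 'I_2) * 'I_4 => R p.1 p.2).
move: hN => /fin_all_exists [z hz].
exists N; split => // k l.
move: (hR (k, l)) => /= ->; rewrite scaler_sumr; apply/He.1.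
exists (fun i => z ((k, l), i)); apply: eq_bigr => i _.
by rewrite scalerA (hz ((k, l), i)).
Qed.

Lemma discrete (g : 'M[D]_2) : exists K : nat, (0 < K)%N /\
  forall v : 'rV[D]_2, (forall j, O (v 0 j)) ->
  forall r, @Q D conj (v *m g) = r%:A -> exists z : int, K%:R * r = z%:~R.
Proof.
have [N [N0 hN]] := den_mat g.
have [K0 [K00 hK0]] := norm_O.
exists (K0 * (N * N))%N; split; first by rewrite !muln_gt0 K00 N0.
move=> v hv r hr.
have Hj : forall j, exists n z, (v *m g) 0 j * conj ((v *m g) 0 j) = n%:A /\ (K0 * (N * N))%N%:R * n = z%:~R.
  move=> j; set a := (v *m g) 0 j.
  have hy : O (N%:R *: a).
    rewrite /a mxE scaler_sumr; apply: Osum => k _.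
    by rewrite scalerAr; apply: OM.
  case: Hc => _ _ _ _ H; have [t [n [_ hn]]] := H a.
  have hyn : (N%:R *: a) * conj (N%:R *: a) = ((N%:R * N%:R) * n)%:A.
    by rewrite (@conjZ _ _ Hc) -scalerAl -scalerAr hn !scalerA.
  have [z hz] := hK0 _ _ hy hyn.
  by exists n, z; split => //; rewrite -hz !natrM; ring.
move: hr; rewrite QE => hr.
have : exists r' z, \sum_j (v *m g) 0 j * conj ((v *m g) 0 j) = r'%:A /\ (K0 * (N * N))%N%:R * r' = z%:~R.
  apply: (big_ind (fun t => exists r' z, t = r'%:A /\ (K0 * (N * N))%N%:R * r' = z%:~R)).
  - by exists 0, 0; rewrite scale0r mulr0.
  - move=> _ _ [a [za [-> ha]]] [b [zb [-> hb]]]; exists (a + b), (za + zb).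
    by rewrite scalerDl mulrDr ha hb intrD.
  - by move=> j _; apply: Hj.
move=> [r' [z [h1 h2]]]; exists z; rewrite -h2.
by rewrite hr in h1; rewrite (@A_inj _ _ _ h1).
Qed.

End Lat.

Lemma delta_mulE (D : falgType rat) (i j : 'I_2) (A : 'M[D]_2) :
  ((delta_mx 0 i : 'rV[D]_2) *m A) 0 j = A i j.
Proof. by rewrite -rowE mxE. Qed.

Theorem theorem5p1 (p : nat) (D : falgType rat) (conj : D -> D) (O : D -> Prop)
    (g ginv : 'M[D]_2) :
  prime p ->
  quaternion_division_algebra D ->
  standard_involution conj ->
  definite conj ->
  maximal_order O ->
  reduced_disc conj O p ->
  g *m ginv = 1%:M -> ginv *m g = 1%:M ->
  ~ principal_genus_at_p conj O p g ->
  forall gamma : 'M[D]_2,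
    (GU2 conj gamma /\ stabilises O g gamma) <->
    (SU2 conj gamma /\ exists u : 'M[D]_2, GL2O O u /\ gamma = ginv *m u *m g).
Proof.
move=> _ _ Hc Hd [[[e He] O1 OM] _] _ hgg hgg' _ gamma.
have O0' := @O0 _ _ _ He.
have Osum' := @Osum _ _ _ He.
have Odelta : forall i j, O ((delta_mx 0 i : 'rV[D]_2) 0 j).
  by move=> i j; rewrite mxE; case: (_ && _) => /=; rewrite ?mulr1n ?mulr0n.
split.
- move=> [[mu [mu0 hmu]] [St1 St2]].
  pose P r := exists w, in_lattice O g w /\ @Q D conj w = r%:A.
  have fwd : forall r, P r -> P (mu * r).
    move=> r [w [hw hq]]; exists (w *m gamma); split; first exact: St1.
    exact: @Q_mul _ _ Hc _ _ _ _ hmu hq.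
  have bwd : forall r, P r -> P (r / mu).
    move=> r [w [hw hq]]; have [w' [hw' hw'g]] := St2 w hw.
    have [s [_ hs]] := @Q_ge0 _ _ Hc Hd w'.
    exists w'; split => //.
    have := @Q_mul _ _ Hc _ _ _ _ hmu hs; rewrite hw'g hq => /(@A_inj _ _ _) ->.
    by rewrite mulrC mulKf.
  have [K [K0 hK]] := @discrete _ _ Hc _ _ He OM g.
  have lowb : forall r, P r -> 0 < r -> 1 <= K%:R * r.
    move=> r [w [[v [hv ->]] hq]] r0.
    have [z hz] := hK v hv r hq.
    have : 0 < z%:~R :> rat by rewrite -hz mulr_gt0 // ltr0n.
    rewrite hz ltr0z => z0.
    by rewrite (_ : 1 = 1%:~R) // ler_int -gtz0_ge1.
  set x0 := (delta_mx 0 0 : 'rV[D]_2) *m g.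
  have x0nz : x0 != 0.
    apply/eqP => h0.
    have : (delta_mx 0 0 : 'rV[D]_2) = 0.
      by rewrite -[LHS]mulmx1 -hgg mulmxA -/x0 h0 mul0mx.
    move/matrixP => /(_ 0 0); rewrite !mxE eqxx /= => /eqP.
    by rewrite oner_eq0.
  have [m [m0 hm]] := @Q_gt0 _ _ Hc Hd _ x0nz.
  have Pm : P m by exists x0; split => //; exists (delta_mx 0 0); split.
  have mupos : 0 < mu.
    have [w [_ hw]] := fwd _ Pm.
    have [s [s0 hs]] := @Q_ge0 _ _ Hc Hd w.
    rewrite hw in hs; move/(@A_inj _ _ _): hs => hs.
    have : 0 <= mu * m by rewrite hs.
    rewrite pmulr_lge0 // le_eqVlt => /orP [/eqP h|//].
    by rewrite -h eqxx in mu0.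
  have itf : forall k, P (mu ^+ k * m).
    by elim=> [|k IH]; [rewrite expr0 mul1r | rewrite exprS -mulrA; apply: fwd].
  have itb : forall k, P (m / mu ^+ k).
    elim=> [|k IH]; first by rewrite expr0 divr1.
    by rewrite exprSr invfM mulrA; apply: bwd.
  have mu1 : mu = 1.
    case: (ltgtP mu 1) => // h.
    + have a1 : 1 < mu^-1 by rewrite invf_gt1.
      have [k hk] := @small_pow _ _ _ a1 m0 K0.
      have := lowb _ (itf k) (mulr_gt0 (exprn_gt0 k mupos) m0).
      rewrite exprVn invrK [m * _]mulrC in hk.
      by rewrite leNgt hk.
    + have [k hk] := @small_pow _ _ _ h m0 K0.
      have := lowb _ (itb k) (divr_gt0 m0 (exprn_gt0 k mupos)).
      by rewrite leNgt hk.
  rewrite mu1 scale1r in hmu.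
  split => //.
  set u := g *m gamma *m ginv.
  exists u; split; last first.
    by rewrite /u !mulmxA hgg' mul1mx -mulmxA hgg' mulmx1.
  have uO : forall i j, O (u i j).
    move=> i j.
    have [v' [hv' hv'e]] : in_lattice O g ((delta_mx 0 i *m g) *m gamma).
      by apply: St1; exists (delta_mx 0 i); split.
    rewrite -delta_mulE /u !mulmxA hv'e -mulmxA hgg mulmx1.
    exact: hv'.
  have : forall i : 'I_2, exists v : 'rV[D]_2,
      (forall j, O (v 0 j)) /\ v *m u = delta_mx 0 i.
    move=> i.
    have hl : in_lattice O g (delta_mx 0 i *m g).
      by exists (delta_mx 0 i); split.
    have [w' [[v'' [hv'' ->]] hw']] := St2 _ hl.
    exists v''; split => //.
    by rewrite /u !mulmxA hw' -mulmxA hgg mulmx1.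
  move=> /fin_all_exists [f hf].
  set ui := \matrix_(i < 2) f i.
  have hui : ui *m u = 1%:M.
    apply/row_matrixP => i; rewrite row_mul rowK (hf i).2.
    by rewrite rowE mulmx1.
  set r := g *m ctr conj gamma *m ginv.
  have hur : u *m r = 1%:M.
    rewrite /u /r !mulmxA -(mulmxA _ ginv g) hgg' mulmx1.
    by rewrite -(mulmxA g gamma) hmu mulmx1 hgg.
  have uir : ui = r by rewrite -[ui]mulmx1 -hur mulmxA hui mul1mx.
  split => //; exists ui; split.
    by move=> i j; rewrite /ui mxE; apply: (hf i).1.
  by split; [rewrite uir | exact: hui].
- move=> [hS [u [[uO [ui [uiO [hu1 hu2]]]] hgam]]]; subst gamma.
  split.
    by exists 1; split; [exact: oner_neq0 | rewrite scale1r; exact hS].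
  have mulO : forall (v : 'rV[D]_2) (A : 'M[D]_2), (forall j, O (v 0 j)) ->
      (forall i j, O (A i j)) -> forall j, O ((v *m A) 0 j).
    move=> v A hv hA j; rewrite mxE; apply: Osum' => k _; exact: OM.
  split.
  + move=> w [v [hv ->]]; exists (v *m u); split; first exact: mulO.
    by rewrite !mulmxA -(mulmxA v g ginv) hgg mulmx1.
  + move=> w [v [hv ->]]; exists ((v *m ui) *m g); split.
      by exists (v *m ui); split => //; apply: mulO.
    rewrite !mulmxA -(mulmxA (v *m ui) g ginv) hgg mulmx1.
    by rewrite -(mulmxA v ui u) hu2 mulmx1.
Qed.
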